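(* Let $R_{ij},R_{ji},R_i,R_j\in SO(3)$. (1) If $\{R_{ij}^T g R_{ji} : g\in \mathbb{T}\}=\{R_i^T g R_j : g\in \mathbb{T}\}$, then there exist $g_{ij},g_{ji}\in\mathbb{T}$ and $h_{ij}\in\mathbb{O}$ such that $R_{ij}=h_{ij}g_{ij}R_i$ and $R_{ji}=h_{ij}g_{ji}R_j$. (2) If $\{R_{ij}^T g R_{ji} : g\in \mathbb{O}\}=\{R_i^T g R_j : g\in \mathbb{O}\}$, then there exist $g_{ij},g_{ji}\in\mathbb{O}$ such that $R_{ij}=g_{ij}R_i$ and $R_{ji}=g_{ji}R_j$.
   Context: In the fixed coordinate system, $\mathbb{O}$ is the group of all $3\times 3$ signed permutation matrices (exactly one nonzero entry, equal to $\pm1$, in each row and column) of determinant $1$ (24 elements), and $\mathbb{T}\subset\mathbb{O}$ is the 12-element subgroup of matrices $DP$ with $P$ the permutation matrix of an even permutation of $\{1,2,3\}$ and $D$ diagonal with entries $\pm1$ and $\det D=1$. *)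

(* Defs.v *)
From HB Require Import structures.
From mathcomp Require Import all_boot all_order all_algebra all_fingroup.
From mathcomp Require Import reals.
Set Implicit Arguments. Unset Strict Implicit. Unset Printing Implicit Defensive.
Import Order.TTheory GRing.Theory Num.Theory.
Local Open Scope ring_scope.

Definition SO3 {R : realType} (A : 'M[R]_3) : Prop :=
  A *m A^T = 1%:M /\ \det A = 1.

Definition inO {R : realType} (A : 'M[R]_3) : Prop :=
  [/\ (forall i, #|[set j | A i j != 0]| = 1%N),
      (forall j, #|[set i | A i j != 0]| = 1%N),
      (forall i j, A i j != 0 -> A i j = 1 \/ A i j = -1)
    & \det A = 1].

Definition inT {R : realType} (A : 'M[R]_3) : Prop :=
  exists (s : 'S_3) (d : 'rV[R]_3),
    [/\ ~~ odd_perm s,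
        (forall i, d 0 i = 1 \/ d 0 i = -1),
        \det (diag_mx d) = 1
      & A = diag_mx d *m perm_mx s].

Definition coset_set {R : realType} (G : 'M[R]_3 -> Prop) (X Y : 'M[R]_3)
  : 'M[R]_3 -> Prop :=
  fun M => exists g, G g /\ M = X^T *m g *m Y.

Definition set_eq {R : realType} (P Q : 'M[R]_3 -> Prop) : Prop :=
  forall M, P M <-> Q M.

(* Main.v *)
Require Import Defs.
From HB Require Import structures.
From mathcomp Require Import all_boot all_order all_algebra all_fingroup.
From mathcomp Require Import reals ring lra.
Import Order.TTheory GRing.Theory Num.Theory.
Local Open Scope ring_scope.

Definition i0 : 'I_3 := @Ordinal 3 0 isT.
Definition i1 : 'I_3 := @Ordinal 3 1 isT.
Definition i2 : 'I_3 := @Ordinal 3 2 isT.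

Lemma I3cases (x : 'I_3) : x = i0 \/ x = i1 \/ x = i2.
Proof.
case: x => [[|[|[|//]]] H]; [left|right;left|right;right]; exact: val_inj.
Qed.

Lemma I3 {i a b : 'I_3} (x : 'I_3) : i != a -> i != b -> a != b -> [|| x == i, x == a | x == b].
Proof.
by case: i => [[|[|[|//]]] ?]; case: a => [[|[|[|//]]] ?]; case: b => [[|[|[|//]]] ?]; case: x => [[|[|[|//]]] ?].
Qed.

Lemma P1 (s : 'S_3) {i} : ~~ odd_perm s -> s i = i -> s = 1%g.
Proof.
move=> Hev Hi; case: (eqVneq s 1%g) => // Hne; exfalso.
case/boolP: [forall a, s a == a] => [/forallP H|].
  have E : s = 1%g by apply/permP => x; rewrite perm1; exact: (eqP (H x)).
  by rewrite E eqxx in Hne.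
rewrite negb_forall => /existsP [a Ha].
set b := s a.
have ai : a != i by apply: contraNneq Ha => ->; rewrite Hi.
have bi : b != i by apply: contraNneq ai => E; apply/eqP; apply: (@perm_inj _ s); rewrite -/b E Hi.
have ba : b != a by [].
have sbb : s b != b by apply: contraNneq ba => E; apply/eqP; apply: (@perm_inj _ s); rewrite E.
have sbi : s b != i by apply: contraNneq bi => E; apply/eqP; apply: (@perm_inj _ s); rewrite E Hi.
have sba : s b = a.
  have ia : i != a by rewrite eq_sym.
  have ib : i != b by rewrite eq_sym.
  have ab : a != b by rewrite eq_sym.
  have := I3 (s b) ia ib ab.
  by rewrite (negbTE sbi) (negbTE sbb) orbF => /eqP.
have Es : s = tperm a b.
  have ia : i != a by rewrite eq_sym.
  have ib : i != b by rewrite eq_sym.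
  have ab : a != b by rewrite eq_sym.
  apply/permP => x; have := I3 x ia ib ab.
  case/or3P => /eqP ->.
  - by rewrite Hi tpermD // eq_sym.
  - by rewrite tpermL.
  - by rewrite tpermR sba.
by move: Hev; rewrite Es odd_tperm eq_sym ba.
Qed.

Definition sgnv {R : realType} (d : 'rV[R]_3) := forall i, d 0 i = 1 \/ d 0 i = -1.
Definition DP {R : realType} (d : 'rV[R]_3) (s : 'S_3) : 'M[R]_3 := diag_mx d *m perm_mx s.
Definition SP {R : realType} (M : 'M[R]_3) := exists d s, sgnv d /\ M = DP d s.
Definition SPe {R : realType} (M : 'M[R]_3) := exists d s, [/\ sgnv d, ~~ odd_perm s & M = DP d s].
Definition Dk {R : realType} (k : 'I_3) : 'M[R]_3 := diag_mx (\row_i (if i == k then 1 else -1)).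

Lemma DPE {R : realType} (d : 'rV[R]_3) s i j : DP d s i j = if s i == j then d 0 i else 0.
Proof. by rewrite /DP mul_diag_mx !mxE; case: eqP => _; rewrite ?mulr1 ?mulr0. Qed.

Lemma DPM {R : realType} (d1 d2 : 'rV[R]_3) s1 s2 :
  DP d1 s1 *m DP d2 s2 = DP (\row_i (d1 0 i * d2 0 (s1 i))) (s1 * s2)%g.
Proof.
apply/matrixP => i j; rewrite mxE (bigD1 (s1 i)) //= big1 ?addr0.
  by rewrite !DPE eqxx permM mxE; case: ifP => _; rewrite ?mulr0.
by move=> l Hl; rewrite DPE eq_sym (negbTE Hl) mul0r.
Qed.

Lemma perm_eqV (s : 'S_3) i j : (s i == j) = (s^-1%g j == i).
Proof.
apply/eqP/eqP => [<-|<-]; by rewrite ?permK ?permKV.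
Qed.

Lemma DPtr {R : realType} (d : 'rV[R]_3) s :
  (DP d s)^T = DP (\row_i d 0 (s^-1%g i)) s^-1%g.
Proof.
apply/matrixP => i j; rewrite mxE !DPE mxE perm_eqV.
by case: eqP => // <-.
Qed.

Lemma sgn_mul {R : realType} (x y : R) : (x = 1 \/ x = -1) -> (y = 1 \/ y = -1) -> x * y = 1 \/ x * y = -1.
Proof. by case=> ->; case=> ->; rewrite ?mulr1 ?mulrN1 ?opprK; auto. Qed.

Lemma sgnv_mul {R : realType} (d1 d2 : 'rV[R]_3) (f : 'I_3 -> 'I_3) :
  sgnv d1 -> sgnv d2 -> sgnv (\row_i (d1 0 i * d2 0 (f i))).
Proof. by move=> h1 h2 i; rewrite mxE; apply: sgn_mul. Qed.

Lemma sgnv_perm {R : realType} (d : 'rV[R]_3) (f : 'I_3 -> 'I_3) :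
  sgnv d -> sgnv (\row_i d 0 (f i)).
Proof. by move=> h i; rewrite mxE. Qed.

Lemma SP_mul {R : realType} (M N : 'M[R]_3) : SP M -> SP N -> SP (M *m N).
Proof.
case=> d1 [s1 [h1 ->]] [d2 [s2 [h2 ->]]]; rewrite DPM.
exists (\row_i (d1 0 i * d2 0 (s1 i))), (s1 * s2)%g; split => //.
exact: sgnv_mul.
Qed.

Lemma SP_tr {R : realType} (M : 'M[R]_3) : SP M -> SP M^T.
Proof.
case=> d1 [s1 [h1 ->]]; rewrite DPtr.
exists (\row_i d1 0 (s1^-1%g i)), (s1^-1)%g; split => //.
exact: sgnv_perm.
Qed.

Lemma SPe_mul_tr {R : realType} (M N : 'M[R]_3) : SPe M -> SPe N -> SPe (M *m N^T).
Proof.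
case=> d1 [s1 [h1 o1 ->]] [d2 [s2 [h2 o2 ->]]]; rewrite DPtr DPM.
exists (\row_i (d1 0 i * (\row_i0 d2 0 (s2^-1%g i0)) 0 (s1 i))), (s1 * s2^-1)%g; split => //.
  by apply: sgnv_mul => //; apply: sgnv_perm.
by rewrite odd_permM odd_permV (negbTE o1) (negbTE o2).
Qed.

Lemma SP_sq {R : realType} (M : 'M[R]_3) : SP M -> SPe (M *m M).
Proof.
case=> d1 [s1 [h1 ->]]; rewrite DPM.
exists (\row_i (d1 0 i * d1 0 (s1 i))), (s1 * s1)%g; split => //.
  exact: sgnv_mul.
by rewrite odd_permM addbb.
Qed.

Lemma sum3 {R : realType} (F : 'I_3 -> R) : \sum_i F i = F i0 + F i1 + F i2.
Proof.
rewrite !big_ord_recr big_ord0 /= add0r; congr (_ + _ + _); congr F; exact: val_inj.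
Qed.

Lemma prod3 {R : realType} (F : 'I_3 -> R) : \prod_i F i = F i0 * F i1 * F i2.
Proof.
rewrite !big_ord_recr big_ord0 /= mul1r; congr (_ * _ * _); congr F; exact: val_inj.
Qed.

Lemma C1 {R : realType} (X : 'M[R]_3) : SPe X -> \tr X = -1 -> exists j, X = Dk j.
Proof.
case=> d [s [hd ho ->]] Htr.
case: (eqVneq s 1%g) => [Es|Hne]; last first.
  exfalso.
  have nf : forall i, s i != i.
    by move=> i; apply/eqP => /(@P1 s i ho) E; rewrite E eqxx in Hne.
  move: Htr; rewrite /mxtrace big1 => [|i _]; last by rewrite DPE (negbTE (nf i)).
  by move/eqP; rewrite eq_sym oppr_eq0 oner_eq0.
subst s; move: Htr; rewrite /DP perm_mx1 mulmx1 mxtrace_diag sum3.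
have [h0|h0] := hd i0; have [h1|h1] := hd i1; have [h2|h2] := hd i2;
  rewrite h0 h1 h2 => Htr; try (exfalso; lra).
- exists i0; congr diag_mx; apply/rowP => a; rewrite mxE.
  by have [->|[->|->]] := I3cases a.
- exists i1; congr diag_mx; apply/rowP => a; rewrite mxE.
  by have [->|[->|->]] := I3cases a.
- exists i2; congr diag_mx; apply/rowP => a; rewrite mxE.
  by have [->|[->|->]] := I3cases a.
Qed.

Lemma Key {R : realType} (A : 'M[R]_3) : A *m A^T = 1%:M ->
  (forall k, exists j, Dk k *m A = A *m Dk j) -> SP A.
Proof.
move=> HA H; have [f Hf] := fin_all_exists H.
have Hz : forall i j, A i j != 0 -> j = f i.
  move=> i j Hij; have := congr1 (fun M : 'M[R]_3 => M i j) (Hf i).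
  rewrite /Dk mul_diag_mx mul_mx_diag !mxE eqxx.
  case: eqP => // Hj E; exfalso.
  have E0 : A i j = 0 by lra.
  by rewrite E0 eqxx in Hij.
have Hsq : forall i, A i (f i) ^+ 2 = 1.
  move=> i; have := congr1 (fun M : 'M[R]_3 => M i i) HA.
  rewrite !mxE eqxx /= (bigD1 (f i)) //= big1 ?addr0 ?mxE ?expr2 //.
  move=> l Hl; rewrite mxE.
  case: (eqVneq (A i l) 0) => [->|/Hz E]; first by rewrite mul0r.
  by rewrite E eqxx in Hl.
have Hnz : forall i, A i (f i) != 0.
  by move=> i; apply/eqP => E; have := Hsq i; rewrite E expr2 mul0r => /eqP; rewrite eq_sym oner_eq0.
have finj : injective f.
  move=> i i' Ef; apply/eqP; apply/negPn/negP => Hne.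
  have := congr1 (fun M : 'M[R]_3 => M i' (f i)) (Hf i).
  rewrite /Dk mul_diag_mx mul_mx_diag !mxE eqxx eq_sym (negbTE Hne) => E.
  have E0 : A i' (f i) = 0 by lra.
  by move: (Hnz i'); rewrite -Ef E0 eqxx.
exists (\row_i A i (f i)), (perm finj); split.
  move=> i; rewrite mxE; move/eqP: (Hsq i); rewrite sqrf_eq1 => /orP[/eqP->|/eqP->]; auto.
apply/matrixP => i j; rewrite DPE permE mxE.
case: eqP => [<-//|Hne].
apply/eqP; apply/negPn/negP => /Hz E.
by apply: Hne.
Qed.

Lemma SP_inO {R : realType} (M : 'M[R]_3) : SP M -> \det M = 1 -> inO M.
Proof.
case=> d [s [hd ->]] Hdet.
have dnz : forall i, d 0 i != 0.
  by move=> i; case: (hd i) => ->; rewrite ?oppr_eq0 oner_eq0.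
split => //.
- move=> i; suff -> : [set j | DP d s i j != 0] = [set s i] by rewrite cards1.
  apply/setP => j; rewrite !inE DPE.
  case: (s i =P j) => [<-|Hne]; first by rewrite eqxx dnz.
  by rewrite eqxx; apply/esym/eqP => E; apply: Hne; rewrite E.
- move=> j; suff -> : [set i | DP d s i j != 0] = [set s^-1%g j] by rewrite cards1.
  apply/setP => i; rewrite !inE DPE perm_eqV.
  case: (s^-1%g j =P i) => [<-|Hne]; first by rewrite eqxx dnz.
  by rewrite eqxx; apply/esym/eqP => E; apply: Hne; rewrite E.
- move=> i j; rewrite DPE; case: ifP => _; last by rewrite eqxx.
  by move=> _; apply: hd.
Qed.

Lemma inO_SP {R : realType} (M : 'M[R]_3) : inO M -> SP M.
Proof.
case=> Hr Hc He Hdet.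
have H1 : forall i, exists j, [set j | M i j != 0] = [set j].
  by move=> i; apply/cards1P; rewrite Hr.
have [f Hf] := fin_all_exists H1.
have Hz : forall i j, (M i j != 0) = (j == f i).
  by move=> i j; have := congr1 (fun S : {set 'I_3} => j \in S) (Hf i); rewrite !inE.
have finj : injective f.
  move=> i i' Ef.
  have /cards1P [x Hx] : #|[set k | M k (f i) != 0]| == 1%N by rewrite Hc.
  have : i \in [set k | M k (f i) != 0] by rewrite inE Hz.
  have : i' \in [set k | M k (f i) != 0] by rewrite inE Hz Ef.
  by rewrite Hx !inE => /eqP -> /eqP ->.
exists (\row_i M i (f i)), (perm finj); split.
  move=> i; rewrite mxE; apply: He; by rewrite Hz.
apply/matrixP => i j; rewrite DPE permE mxE.
case: eqP => [<-//|Hne].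
apply/eqP; apply/negPn/negP; rewrite Hz => /eqP E.
by apply: Hne.
Qed.

Lemma Dk_DP {R : realType} (k : 'I_3) :
  Dk k = DP (\row_i (if i == k then 1 else -1) : 'rV[R]_3) 1%g.
Proof. by rewrite /DP perm_mx1 mulmx1. Qed.

Lemma Dk_sgn {R : realType} (k : 'I_3) : sgnv (\row_i (if i == k then 1 else -1) : 'rV[R]_3).
Proof. by move=> i; rewrite mxE; case: ifP; auto. Qed.

Lemma Dk_T {R : realType} (k : 'I_3) : inT (Dk k : 'M[R]_3).
Proof.
exists 1%g, (\row_i (if i == k then 1 else -1)); split.
- by rewrite odd_perm1.
- exact: Dk_sgn.
- rewrite det_diag prod3 !mxE.
  by have [->|[->|->]] := I3cases k; rewrite /=; ring.
- exact: Dk_DP.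
Qed.

Lemma Dk_tr {R : realType} (k : 'I_3) : \tr (Dk k : 'M[R]_3) = -1.
Proof.
rewrite mxtrace_diag sum3 !mxE.
by have [->|[->|->]] := I3cases k; rewrite /=; lra.
Qed.

Lemma one_T {R : realType} : inT (1%:M : 'M[R]_3).
Proof.
exists 1%g, (\row_i 1); split.
- by rewrite odd_perm1.
- by move=> i; rewrite mxE; auto.
- by rewrite det_diag prod3 !mxE !mulr1.
- by rewrite perm_mx1 mulmx1; apply/matrixP => i j; rewrite !mxE.
Qed.

Lemma tr_conj {R : realType} (A D : 'M[R]_3) : A *m A^T = 1%:M -> \tr (A^T *m D *m A) = \tr D.
Proof.
by move=> HA; rewrite -mulmxA mxtrace_mulC -mulmxA HA mulmx1.
Qed.

Lemma eq_sym_neq {T : eqType} {x y : T} : x != y -> y != x.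
Proof. by rewrite eq_sym. Qed.

Lemma rot_gen {R : realType} (k a b : 'I_3) : k != a -> k != b -> a != b ->
  exists g : 'M[R]_3, inO g /\ g *m g = Dk k.
Proof.
move=> ka kb ab.
pose d : 'rV[R]_3 := \row_i (if i == a then -1 else 1).
have hd : sgnv d by move=> i; rewrite mxE; case: ifP; auto.
exists (DP d (tperm a b)); split.
  apply: SP_inO; first by exists d, (tperm a b).
  rewrite det_mulmx det_diag det_perm odd_tperm ab (bigD1 a) //= big1 => [|i /negbTE Hi]; last by rewrite mxE Hi.
  by rewrite mxE eqxx mulr1 expr1 mulrNN mulr1.
rewrite DPM Dk_DP.
have -> : (tperm a b * tperm a b)%g = 1%g by apply/permP => x; rewrite permM tpermK perm1.
congr DP; apply/rowP => i; rewrite !mxE.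
have ba : b != a by rewrite eq_sym.
have := I3 i ka kb ab; case/or3P => /eqP ->.
- by rewrite (tpermD (eq_sym_neq ka) (eq_sym_neq kb)) (negbTE ka) eqxx mulr1.
- by rewrite tpermL eqxx (negbTE ba) eq_sym (negbTE ka) mulr1.
- by rewrite tpermR eqxx (negbTE ba) eq_sym (negbTE kb) mul1r.
Qed.

Lemma rot_O {R : realType} (k : 'I_3) : exists g : 'M[R]_3, inO g /\ g *m g = Dk k.
Proof.
have [->|[->|->]] := I3cases k.
- by apply: (@rot_gen _ i0 i1 i2).
- by apply: (@rot_gen _ i1 i0 i2).
- by apply: (@rot_gen _ i2 i0 i1).
Qed.

Lemma inT_SPe {R : realType} (M : 'M[R]_3) : inT M -> SPe M.
Proof. by case=> s [d [ho hd _ ->]]; exists d, s. Qed.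

Lemma inT_SP {R : realType} (M : 'M[R]_3) : inT M -> SP M.
Proof. by case=> s [d [ho hd _ ->]]; exists d, s. Qed.

Lemma one_O {R : realType} : inO (1%:M : 'M[R]_3).
Proof. by apply: SP_inO; [apply: inT_SP; apply: one_T | rewrite det1]. Qed.

Lemma inO_det {R : realType} (M : 'M[R]_3) : inO M -> \det M = 1.
Proof. by case. Qed.

Lemma inO_mul {R : realType} (M N : 'M[R]_3) : inO M -> inO N -> inO (M *m N).
Proof.
move=> hM hN; apply: SP_inO; first by apply: SP_mul; apply: inO_SP.
by rewrite det_mulmx !inO_det // mulr1.
Qed.

Lemma partT {R : realType} (A B : 'M[R]_3) : A *m A^T = 1%:M -> B *m B^T = 1%:M -> \det A = 1 ->
  (forall g, inT g -> inT (A^T *m g *m B)) -> inO A.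
Proof.
move=> HA HB dA H.
have g0T : inT (A^T *m B) by have := H _ one_T; rewrite mulmx1.
suff KA : SP A by exact: SP_inO KA dA.
apply: Key => // k.
have XT : SPe (A^T *m Dk k *m A).
  have -> : A^T *m Dk k *m A = (A^T *m Dk k *m B) *m (A^T *m B)^T.
    by rewrite trmx_mul trmxK !mulmxA -(mulmxA _ B) HB mulmx1.
  by apply: SPe_mul_tr; apply: inT_SPe; [apply: H; apply: Dk_T|].
have Htr : \tr (A^T *m Dk k *m A) = -1 by rewrite tr_conj //; exact: (@Dk_tr R k).
have [j Hj] := @C1 _ _ XT Htr.
by exists j; rewrite -Hj !mulmxA HA mul1mx.
Qed.

Lemma conj_sq {R : realType} (A g : 'M[R]_3) : A *m A^T = 1%:M ->
  (A^T *m g *m A) *m (A^T *m g *m A) = A^T *m (g *m g) *m A.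
Proof. by move=> HA; rewrite -!mulmxA (mulmxA A) HA mul1mx. Qed.

Lemma partO {R : realType} (A B : 'M[R]_3) : A *m A^T = 1%:M -> B *m B^T = 1%:M -> \det A = 1 ->
  (forall g, inO g -> inO (A^T *m g *m B)) -> inO A /\ inO B.
Proof.
move=> HA HB dA H.
have g0O : inO (A^T *m B) by have := H _ one_O; rewrite mulmx1.
have AO : inO A.
  suff KA : SP A by exact: SP_inO KA dA.
  apply: Key => // k.
  have [g [gO gg]] := @rot_O R k.
  have YS : SP (A^T *m g *m A).
    have -> : A^T *m g *m A = (A^T *m g *m B) *m (A^T *m B)^T.
      by rewrite trmx_mul trmxK !mulmxA -(mulmxA _ B) HB mulmx1.
    by apply: SP_mul; [apply: inO_SP; apply: H | apply: SP_tr; apply: inO_SP].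
  have XT := @SP_sq _ _ YS.
  rewrite conj_sq // gg in XT.
  have Htr : \tr (A^T *m Dk k *m A) = -1 by rewrite tr_conj //; exact: (@Dk_tr R k).
  have [j Hj] := @C1 _ _ XT Htr.
  by exists j; rewrite -Hj !mulmxA HA mul1mx.
split => //.
have -> : B = A *m (A^T *m B) by rewrite mulmxA HA mul1mx.
exact: inO_mul.
Qed.

Lemma transfer {R : realType} (G : 'M[R]_3 -> Prop) (Rij Rji Ri Rj : 'M[R]_3) :
  Ri *m Ri^T = 1%:M -> Rj *m Rj^T = 1%:M ->
  set_eq (coset_set G Rij Rji) (coset_set G Ri Rj) ->
  forall g, G g -> G ((Rij *m Ri^T)^T *m g *m (Rji *m Rj^T)).
Proof.
move=> HRi HRj HS g Gg.
have [g' [Gg' E]] := (HS (Rij^T *m g *m Rji)).1 (ex_intro _ g (conj Gg erefl)).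
rewrite trmx_mul trmxK.
have -> : Ri *m Rij^T *m g *m (Rji *m Rj^T) = Ri *m (Rij^T *m g *m Rji) *m Rj^T by rewrite !mulmxA.
by rewrite E !mulmxA HRi mul1mx -mulmxA HRj mulmx1.
Qed.

Theorem corollary1 (R : realType) (Rij Rji Ri Rj : 'M[R]_3) :
  SO3 Rij -> SO3 Rji -> SO3 Ri -> SO3 Rj ->
  (set_eq (coset_set inT Rij Rji) (coset_set inT Ri Rj) ->
     exists gij gji hij,
       [/\ inT gij, inT gji, inO hij,
           Rij = hij *m gij *m Ri & Rji = hij *m gji *m Rj]) /\
  (set_eq (coset_set inO Rij Rji) (coset_set inO Ri Rj) ->
     exists gij gji,
       [/\ inO gij, inO gji, Rij = gij *m Ri & Rji = gji *m Rj]).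
Proof.
move=> [HRij dRij] [HRji dRji] [HRi dRi] [HRj dRj].
have HRi' : Ri^T *m Ri = 1%:M := mulmx1C HRi.
have HRj' : Rj^T *m Rj = 1%:M := mulmx1C HRj.
have HA : (Rij *m Ri^T) *m (Rij *m Ri^T)^T = 1%:M.
  by rewrite trmx_mul trmxK !mulmxA -(mulmxA Rij) HRi' mulmx1 HRij.
have HB : (Rji *m Rj^T) *m (Rji *m Rj^T)^T = 1%:M.
  by rewrite trmx_mul trmxK !mulmxA -(mulmxA Rji) HRj' mulmx1 HRji.
have dA : \det (Rij *m Ri^T) = 1 by rewrite det_mulmx det_tr dRij dRi mulr1.
have EA : Rij = (Rij *m Ri^T) *m Ri by rewrite -mulmxA HRi' mulmx1.
have EB : Rji = (Rji *m Rj^T) *m Rj by rewrite -mulmxA HRj' mulmx1.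
split => HS.
- have Ht := @transfer _ _ _ _ _ _ HRi HRj HS.
  exists 1%:M, ((Rij *m Ri^T)^T *m (Rji *m Rj^T)), (Rij *m Ri^T); split.
  + exact: one_T.
  + by have := Ht _ one_T; rewrite mulmx1.
  + exact: (@partT _ _ _ HA HB dA Ht).
  + by rewrite mulmx1 -EA.
  + by rewrite (mulmxA (Rij *m Ri^T)) HA mul1mx -EB.
- have Ht := @transfer _ _ _ _ _ _ HRi HRj HS.
  have [AO BO] := @partO _ _ _ HA HB dA Ht.
  by exists (Rij *m Ri^T), (Rji *m Rj^T); split.
Qed.
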